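(* Let $r\in(0,1/36)$, $p\in(0,r)$, $h=8/15$, $a=3/15$, let $m,n\in\mathbb N$ and $D_{mn}(p,r)=\left(\frac{a\,r^{n+1}}{p^m},\,r\right)$. For $q\in D_{mn}(p,r)$ let $K_{pqr}$ be the attractor of $\mathcal S_{pqr}=\{S_1,\dots,S_6\}$ with $S_1(x)=px$, $S_2(x)=a+rx$, $S_3(x)=h-qx$, $S_4(x)=h-r+rx$, $S_5(x)=1-a-rx$, $S_6(x)=1-r+rx$. Let $\Delta_{mn}(p,r)$ be the set of $q\in D_{mn}(p,r)$ for which there exist $i\in\{2,\dots,6\}$ and $j\in\{1,\dots,5\}$ with $S_3S_1^mS_i(K_{pqr})\cap S_4S_6^nS_j(K_{pqr})\neq\emptyset$. Then $\Delta_{mn}(p,r)$ is a closed subset of $D_{mn}(p,r)$ and $\dim_H\Delta_{mn}(p,r)\le-\frac{2\log 6}{\log r}$.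
   Context: $S_1^m$ denotes $m$-fold composition; $\dim_H$ is Hausdorff dimension. *)

(* Defs.v *)
From HB Require Import structures.
From mathcomp Require Import all_boot all_order all_algebra.
From mathcomp Require Import all_classical all_reals all_analysis.
Set Implicit Arguments. Unset Strict Implicit. Unset Printing Implicit Defensive.
Import Order.TTheory GRing.Theory Num.Theory.
Import numFieldNormedType.Exports.
Local Open Scope classical_set_scope.
Local Open Scope ring_scope.

Section Defs.
Variable R : realType.

Definition hh : R := 8 / 15.
Definition aa : R := 3 / 15.

(* the maps S_1, ..., S_6 of S_{pqr} (index outside 1..6 : identity, never used) *)
Definition Smap (p q r : R) (i : nat) (x : R) : R :=
  match i with
  | 1 => p * x
  | 2 => aa + r * x
  | 3 => hh - q * x
  | 4 => hh - r + r * x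
  | 5 => 1 - aa - r * x
  | 6 => 1 - r + r * x
  | _ => x
  end.

Definition is_attractor (p q r : R) (K : set R) : Prop :=
  K !=set0 /\ compact K /\
  K = [set y | exists i : nat, (1 <= i <= 6)%N /\ exists2 x, K x & y = Smap p q r i x].

Definition Dmn (m n : nat) (p r : R) : set R :=
  [set q | aa * r ^+ n.+1 / p ^+ m < q < r].

Definition Deltamn (m n : nat) (p r : R) : set R :=
  [set q | Dmn m n p r q /\
     exists K, is_attractor p q r K /\
       exists i j : nat, (2 <= i <= 6)%N /\ (1 <= j <= 5)%N /\
         ((Smap p q r 3 \o iter m (Smap p q r 1) \o Smap p q r i) @` K)
         `&` ((Smap p q r 4 \o iter n (Smap p q r 6) \o Smap p q r j) @` K)
         !=set0].

(* s-dimensional Hausdorff delta-premeasure, for s > 0: infimum of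
   sum_i d_i^s over countable covers (U_i) of A with diam U_i <= d_i <= delta
   (infimum over such d_i equals infimum of sum diam(U_i)^s). *)
Definition hausdorff_pre (s delta : R) (A : set R) : \bar R :=
  ereal_inf [set v : \bar R | exists (U : nat -> set R) (d : nat -> R),
     (forall k, 0 <= d k <= delta) /\
     (forall k x y, U k x -> U k y -> `|x - y| <= d k) /\
     A `<=` \bigcup_k U k /\
     v = (\sum_(0 <= k <oo) ((d k) `^ s)%:E)%E].

(* s-dimensional Hausdorff outer measure: limit (= sup) as delta -> 0+ *)
Definition hausdorff_measure (s : R) (A : set R) : \bar R :=
  ereal_sup [set hausdorff_pre s delta A | delta in [set delta : R | 0 < delta]].

Definition hausdorff_dim (A : set R) : \bar R :=
  ereal_inf [set s%:E | s in [set s : R | 0 < s /\ hausdorff_measure s A = 0%E]].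

End Defs.

(* Main.v *)
Require Import Defs.
From HB Require Import structures.
From mathcomp Require Import all_boot all_order all_algebra.
From mathcomp Require Import all_classical all_reals all_analysis.
From mathcomp Require Import ring lra.
Import Order.TTheory GRing.Theory Num.Theory.
Import numFieldNormedType.Exports.
Local Open Scope classical_set_scope.
Local Open Scope ring_scope.
Set Implicit Arguments. Unset Strict Implicit. Unset Printing Implicit Defensive.
From mathcomp Require Import zify.

Definition Sw (R : realType) (p q r : R) (w : seq nat) : R -> R :=
  foldr (fun i f => Smap p q r i \o f) id w.

Definition valid (w : seq nat) := all (fun i => (1 <= i <= 6)%N) w.

Definition rat_ (R : realType) (p q r : R) (i : nat) : R :=
  match i with 1 => p | 2 => r | 3 => - q | 4 => r | 5 => - r | 6 => r | _ => 1 end.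
Definition off_ (R : realType) (r : R) (i : nat) : R :=
  match i with 1 => 0 | 2 => aa R | 3 => hh R | 4 => hh R - r | 5 => 1 - aa R | 6 => 1 - r | _ => 0 end.

Lemma SmapE (R : realType) (p q r : R) i x : Smap p q r i x = off_ r i + rat_ p q r i * x.
Proof.
do 7 (case: i => [|i]; rewrite /= ?add0r ?mul1r //; try (rewrite /off_ /rat_ /=; ring)).
Qed.

Definition par (R : realType) (p q r : R) := [/\ 0 < p, p <= r, 0 <= q, q <= r & r <= 1/36].

Lemma rat_le (R : realType) (p q r : R) i : par p q r -> (1 <= i <= 6)%N -> `|rat_ p q r i| <= r.
Proof.
case=> p0 pr q0 qr r1.
case: i => [|[|[|[|[|[|[|i]]]]]]] //= _; rewrite ?normrN ger0_norm //; lra.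
Qed.

Lemma Smap01 (R : realType) (p q r : R) i x : par p q r -> (1 <= i <= 6)%N ->
  0 <= x <= 1 -> 0 <= Smap p q r i x <= 1.
Proof.
case=> p0 pr q0 qr r1 hi /andP[x0 x1].
rewrite /aa /hh.
case: i hi => [|[|[|[|[|[|[|i]]]]]]] //= _; rewrite /aa /hh; apply/andP; split; nra.
Qed.

Lemma Sw_cons (R : realType) (p q r : R) i w x : Sw p q r (i :: w) x = Smap p q r i (Sw p q r w x).
Proof. by []. Qed.

Lemma Sw_cat (R : realType) (p q r : R) w1 w2 x : Sw p q r (w1 ++ w2) x = Sw p q r w1 (Sw p q r w2 x).
Proof. by elim: w1 => //= i w IH; rewrite IH. Qed.

Lemma Sw_nseq1 (R : realType) (p q r : R) m x : Sw p q r (nseq m 1%N) x = p ^+ m * x.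
Proof. elim: m => [|m IH] /=; first by rewrite expr0 mul1r. by rewrite IH exprS mulrA. Qed.

Lemma Sw_nseq6 (R : realType) (p q r : R) n x : Sw p q r (nseq n 6%N) x = 1 - r ^+ n + r ^+ n * x.
Proof. elim: n => [|n IH] /=; first by rewrite expr0 mul1r; ring. rewrite IH exprS; ring. Qed.

Lemma iter_Sw (R : realType) (p q r : R) i m x : iter m (Smap p q r i) x = Sw p q r (nseq m i) x.
Proof. by elim: m => //= m ->. Qed.

Lemma Sw01 (R : realType) (p q r : R) w x : par p q r -> valid w -> 0 <= x <= 1 -> 0 <= Sw p q r w x <= 1.
Proof.
move=> hp; elim: w => //= i w IH /andP[hi hw] hx.
by apply: Smap01 => //; apply: IH.
Qed.

Lemma Smap_contr (R : realType) (p q r : R) i x y : par p q r -> (1 <= i <= 6)%N ->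
  `|Smap p q r i x - Smap p q r i y| <= r * `|x - y|.
Proof.
move=> hp hi; rewrite !SmapE.
have -> : off_ r i + rat_ p q r i * x - (off_ r i + rat_ p q r i * y) = rat_ p q r i * (x - y) by ring.
by rewrite normrM ler_wpM2r // rat_le.
Qed.

Lemma Sw_contr (R : realType) (p q r : R) w x y : par p q r -> valid w ->
  `|Sw p q r w x - Sw p q r w y| <= r ^+ size w * `|x - y|.
Proof.
move=> hp; elim: w => /= [|i w IH /andP[hi hw]]; first by rewrite expr0 mul1r.
apply: le_trans (Smap_contr _ _ hp hi) _.
rewrite exprS -mulrA ler_wpM2l //; last by apply: IH.
by case: hp => p0 pr *; lra.
Qed.

Definition LL (R : realType) : R := 36 / 35.

Lemma Sw_q (R : realType) (p q q' r : R) w x : par p q r -> par p q' r -> valid w -> 0 <= x <= 1 ->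
  `|Sw p q r w x - Sw p q' r w x| <= LL R * `|q - q'|.
Proof.
move=> hp hp' + hx; elim: w => /= [|i w IH /andP[hi hw]].
  rewrite subrr normr0 mulr_ge0 // ?normr_ge0 // /LL; lra.
set a := Sw p q r w x; set b := Sw p q' r w x.
have hb : 0 <= b <= 1 by apply: Sw01.
have h2 : `|Smap p q r i b - Smap p q' r i b| <= `|q - q'|.
  rewrite !SmapE.
  case: i hi => [|[|[|[|[|[|[|i]]]]]]] //= _; rewrite ?addrA ?subrr ?normr0 ?normr_ge0 //.
  have -> : hh R + - q * b - (hh R + - q' * b) = (q' - q) * b by ring.
  rewrite normrM distrC ger0_norm; last by case/andP: hb.
  by case/andP: hb => *; rewrite ler_piMr ?normr_ge0.
have h1 := Smap_contr a b hp hi.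
have := IH hw; rewrite -/a -/b => h3.
have h4 : `|Smap p q r i a - Smap p q' r i b| <= `|Smap p q r i a - Smap p q r i b| + `|Smap p q r i b - Smap p q' r i b|.
  have -> : Smap p q r i a - Smap p q' r i b = (Smap p q r i a - Smap p q r i b) + (Smap p q r i b - Smap p q' r i b) by ring.
  exact: ler_normD.
case: hp => p0 pr q0 qr r1.
have : 0 <= `|q - q'| by [].
move: h1 h2 h3 h4; rewrite /LL; set d := `|q - q'|; set e := `|a - b|. nra.
Qed.

Lemma geo (R : realType) (rho eps : R) : 0 <= rho < 1 -> 0 < eps ->
  exists k0, forall k, (k0 <= k)%N -> rho ^+ k < eps.
Proof.
move=> /andP[r0 r1] e0.
have hr : `|rho| < 1 by rewrite ger0_norm.
have [k0 _ Hk] := cvg_expr hr (nbhsx_ballx 0 eps e0).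
exists k0 => k hk; have := Hk k hk; rewrite /= -ball_normE /ball_ /= sub0r normrN.
by rewrite ger0_norm ?exprn_ge0.
Qed.

Lemma compact_bnd (R : realType) (K : set R) : compact K -> exists B, forall x, K x -> `|x| <= B.
Proof.
move=> /compact_bounded [M [_ HM]]; exists (M + 1) => x Kx.
by apply: (HM (M + 1)) => //; rewrite ltrDl.
Qed.

Lemma att_inv (R : realType) (p q r : R) K w x : is_attractor p q r K -> valid w -> K x -> K (Sw p q r w x).
Proof.
case=> _ [_ HK] + Kx; elim: w => //= i w IH /andP[hi hw].
by rewrite [X in X _]HK; exists i; split => //; exists (Sw p q r w x) => //; apply: IH.
Qed.

Lemma att_dec (R : realType) (p q r : R) K z k : is_attractor p q r K -> K z ->
  exists w, [/\ valid w, size w = k & exists2 x, K x & z = Sw p q r w x].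
Proof.
case=> _ [_ HK]; elim: k z => [|k IH] z Kz.
  by exists [::]; split => //; exists z.
move: Kz; rewrite [X in X z -> _]HK => -[i [hi [y Ky ->]]].
have [w [hw sw [x Kx ->]]] := IH y Ky.
by exists (i :: w); split => //=; [rewrite hi | rewrite sw | exists x].
Qed.

Lemma att01 (R : realType) (p q r : R) K z : par p q r -> is_attractor p q r K -> K z -> 0 <= z <= 1.
Proof.
move=> hp hK Kz; have [_ [cK _]] := hK.
have [B HB] := compact_bnd cK.
have B0 : 0 <= B by apply: le_trans (HB z Kz).
have hr : 0 <= r < 1 by case: hp => p0 pr *; apply/andP; split; lra.
suff H : forall eps, 0 < eps -> - eps <= z <= 1 + eps.
  apply/andP; split; rewrite leNgt; apply/negP => hz.
    by have := H (- z / 2); case/andP: (H (- z / 2) ltac:(lra)) => *; lra.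
  by case/andP: (H ((z - 1) / 2) ltac:(lra)) => *; lra.
move=> eps e0.
have e1 : 0 < eps / (B + 1) by apply: divr_gt0; lra.
have [k0 Hk] := geo hr e1.
have [w [hw sw [x Kx zE]]] := att_dec k0 hK Kz.
have h1 := Sw_contr x 0 hp hw.
have h0 := Sw01 hp hw (x:=0) ltac:(lra).
have hk := Hk k0 (leqnn _); rewrite sw in h1.
have hx := HB x Kx; rewrite subr0 in h1.
have h2 : r ^+ k0 * `|x| <= eps.
  have -> : eps = eps / (B + 1) * (B + 1) by field; lra.
  have rk0 : 0 <= r ^+ k0 by rewrite exprn_ge0 //; case/andP: hr.
  have : 0 <= `|x| by [].
  nra.
rewrite -zE in h1; move: h1 h0; set s := Sw p q r w 0; move=> h1 h0.
have := le_trans h1 h2; rewrite ler_norml => /andP[? ?].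
case/andP: h0 => ? ?; apply/andP; split; lra.
Qed.

Lemma lip_cont (R : realType) (f : R -> R) (k : R) : 0 < k ->
  (forall x y, `|f x - f y| <= k * `|x - y|) -> continuous f.
Proof.
move=> k0 Hf x; apply/cvgrPdist_lt => e e0.
have ek : 0 < e / k by apply: divr_gt0.
apply: filterS (nbhsx_ballx x (e / k) ek) => t; rewrite -ball_normE /= => ht.
apply: le_lt_trans (Hf x t) _.
have -> : e = k * (e / k) by field; lra.
by rewrite ltr_pM2l.
Qed.

Lemma Smap_cont (R : realType) (p q r : R) i : continuous (Smap p q r i).
Proof.
apply: (@lip_cont _ _ (`|rat_ p q r i| + 1)); first by have := normr_ge0 (rat_ p q r i); lra.
move=> x y; rewrite !SmapE.
have -> : off_ r i + rat_ p q r i * x - (off_ r i + rat_ p q r i * y) = rat_ p q r i * (x - y) by ring.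
rewrite normrM ler_wpM2r //; lra.
Qed.

Lemma Sw_cont (R : realType) (p q r : R) w : continuous (Sw p q r w).
Proof.
elim: w => [|i w IH] /= x; first exact: cvg_id.
by apply: continuous_comp; [apply: IH | apply: Smap_cont].
Qed.

Lemma closureP_R (R : realType) (A : set R) x :
  closure A x <-> forall e, 0 < e -> exists a, A a /\ `|x - a| < e.
Proof.
split.
  move=> H e e0; have [a [Aa Ba]] := H _ (nbhsx_ballx x e e0).
  by exists a; split => //; move: Ba; rewrite -ball_normE.
move=> H B /nbhs_ballP [e e0 hB]; have [a [Aa ha]] := H e e0.
by exists a; split => //; apply: hB; rewrite -ball_normE.
Qed.

Lemma pig (T : eqType) (R : realType) (s : seq T) (P : T -> R -> Prop) :
  (forall i e e', 0 < e <= e' -> P i e -> P i e') ->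
  (forall e, 0 < e -> exists2 i, i \in s & P i e) ->
  exists2 i, i \in s & forall e, 0 < e -> P i e.
Proof.
move=> Pm; elim: s => [|a s IH] H.
  by have [i] := H 1 ltr01.
have [Ha|Ha] := pselect (forall e, 0 < e -> P a e).
  by exists a => //; rewrite mem_head.
have [e0 He0] : exists e0, 0 < e0 /\ ~ P a e0.
  apply: contrapT => hn; apply: Ha => e e0; apply: contrapT => hP.
  by apply: hn; exists e.
case: He0 => e00 nP.
have [i iS Pi] : exists2 i, i \in s & forall e, 0 < e -> P i e.
  apply: IH => e ep.
  have m0 : 0 < Num.min e e0 by rewrite lt_min ep e00.
  have [i] := H _ m0; rewrite in_cons => /orP[/eqP ->|ins] hP.
    by exfalso; apply: nP; apply: Pm hP; rewrite m0 ge_min lexx orbT.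
  by exists i => //; apply: Pm hP; rewrite m0 ge_min lexx.
by exists i => //; rewrite in_cons iS orbT.
Qed.

Lemma cmp_meet (R : realType) (A B : set R) : compact A -> closed B ->
  (forall e, 0 < e -> exists a b, [/\ A a, B b & `|a - b| < e]) -> A `&` B !=set0.
Proof.
move=> cA cB H.
pose E := fun e : R => [set a | A a /\ exists b, B b /\ `|a - b| < e].
pose F := filter_from [set e : R | 0 < e] E.
have FF : Filter F.
  apply: filter_from_filter; first by exists 1; rewrite /= ltr01.
  move=> e1 e2 /= h1 h2; exists (Num.min e1 e2); first by rewrite /= lt_min h1 h2.
  move=> a [Aa [b [Bb hab]]]; split; split => //; exists b; split => //;
    apply: lt_le_trans hab _; rewrite ge_min lexx ?orbT //.
have PF : ProperFilter F.
  apply: filter_from_proper => e /= e0.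
  by have [a [b [Aa Bb hab]]] := H e e0; exists a; split => //; exists b.
have FA : F A by exists 1; rewrite /= ?ltr01 // => a [].
have [a [Aa Ca]] := cA F PF FA.
exists a; split => //; apply: cB; apply/closureP_R => e e0.
have e2 : 0 < e / 2 by apply: divr_gt0.
have FE : F (E (e / 2)) by exists (e / 2).
have [c [[Ac [b [Bb hcb]]] hc]] := Ca _ _ FE (nbhsx_ballx a (e / 2) e2).
move: hc; rewrite -ball_normE /= => hac.
exists b; split => //.
have -> : a - b = (a - c) + (c - b) by ring.
apply: le_lt_trans (ler_normD _ _) _; lra.
Qed.

Lemma rat_neq0 (R : realType) (p q r : R) i : par p q r -> 0 < q -> rat_ p q r i != 0.
Proof.
case=> p0 pr q0 qr r1 qp.
case: i => [|[|[|[|[|[|[|i]]]]]]] //=; rewrite ?oppr_eq0 ?oner_eq0 //; apply/eqP; lra.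
Qed.

Lemma att_exists (R : realType) (p q r : R) : par p q r -> 0 < q -> exists K, is_attractor p q r K.
Proof.
move=> hp qp.
pose O := [set y | exists2 w, valid w & y = Sw p q r w 0].
have O01 : O `<=` `[0, 1].
  move=> y [w hw ->]; have := Sw01 hp hw (x := 0) ltac:(lra).
  by rewrite /= in_itv /=.
have K01 : closure O `<=` `[0, 1].
  by move=> y /(closureS O01); rewrite -(closure_id _).1 //; apply: itv_closed.
exists (closure O); split; [|split].
- by exists 0; apply: subset_closure; exists [::].
- exact: subclosed_compact (@closed_closure _ O) (@segment_compact _ 0 1) K01.
apply/seteqP; split => z.
- move=> Cz.
  pose P := fun i e => exists w, valid w /\ `|z - Smap p q r i (Sw p q r w 0)| < e.
  have [i iS Pi] : exists2 i, i \in [:: 1; 2; 3; 4; 5; 6]%N & forall e, 0 < e -> P i e.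
    apply: pig.
      by move=> i e e' /andP[_ ee'] [w [hw hlt]]; exists w; split => //; apply: lt_le_trans ee'.
    move=> e e0; have [a [[w hw ->] ha]] := (closureP_R O z).1 Cz e e0.
    case: w hw ha => [|i w] /=.
      by move=> _ ha; exists 1%N => //; exists [::]; split => //=; rewrite mulr0.
    move=> /andP[hi hw] ha; exists i; last by exists w.
    by move: hi; case: i {ha} => [|[|[|[|[|[|[|i]]]]]]].
  have hi : (1 <= i <= 6)%N by move: iS; rewrite !inE => /orP[/eqP->|/orP[/eqP->|/orP[/eqP->|/orP[/eqP->|/orP[/eqP->|/eqP->]]]]].
  have rn := rat_neq0 i hp qp.
  have rp : 0 < `|rat_ p q r i| by rewrite normr_gt0.
  exists i; split => //.
  exists ((z - off_ r i) / rat_ p q r i); last by rewrite SmapE; field.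
  apply/closureP_R => e e0.
  have [w [hw hlt]] := Pi (e * `|rat_ p q r i|) (mulr_gt0 e0 rp).
  exists (Sw p q r w 0); split; first by exists w.
  move: hlt; rewrite SmapE.
  have -> : z - (off_ r i + rat_ p q r i * Sw p q r w 0) = rat_ p q r i * ((z - off_ r i) / rat_ p q r i - Sw p q r w 0) by field.
  by rewrite normrM mulrC ltr_pM2r.
- case=> i [hi [x Cx ->]]; apply/closureP_R => e e0.
  have [a [[w hw ->] ha]] := (closureP_R O x).1 Cx e e0.
  exists (Smap p q r i (Sw p q r w 0)); split; first by exists (i :: w) => //=; rewrite hi.
  apply: le_lt_trans (Smap_contr _ _ hp hi) _.
  case: hp => p0 pr q0 qr r1; have := normr_ge0 (x - Sw p q r w 0); nra.
Qed.

Lemma Sw_lip1 (R : realType) (p q r : R) w x y : par p q r -> valid w ->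
  `|Sw p q r w x - Sw p q r w y| <= `|x - y|.
Proof.
move=> hp hw; apply: le_trans (Sw_contr x y hp hw) _.
apply: ler_piMl => //; apply: exprn_ile1; case: hp => *; lra.
Qed.

Lemma approx (R : realType) (p q q0 r : R) K K0 z k : par p q r -> par p q0 r ->
  is_attractor p q r K -> is_attractor p q0 r K0 -> K z ->
  exists2 z', K0 z' & `|z - z'| <= LL R * `|q - q0| + r ^+ k.
Proof.
move=> hp hp0 hK hK0 Kz.
have [x0 K0x0] := hK0.1.
have [w [hw sw [x Kx ->]]] := att_dec k hK Kz.
exists (Sw p q0 r w x0); first exact: att_inv.
have x01 := att01 hp hK Kx; have x001 := att01 hp0 hK0 K0x0.
have h1 := Sw_q hp hp0 hw x01.
have h2 := Sw_contr x x0 hp0 hw; rewrite sw in h2.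
have h3 : `|x - x0| <= 1 by rewrite ler_norml; move: x01 x001 => /andP[? ?] /andP[? ?]; apply/andP; split; lra.
have rk : 0 <= r ^+ k by rewrite exprn_ge0 //; case: hp => *; lra.
have h4 : `|Sw p q r w x - Sw p q0 r w x0| <= `|Sw p q r w x - Sw p q0 r w x| + `|Sw p q0 r w x - Sw p q0 r w x0|.
  have -> : Sw p q r w x - Sw p q0 r w x0 = (Sw p q r w x - Sw p q0 r w x) + (Sw p q0 r w x - Sw p q0 r w x0) by ring.
  exact: ler_normD.
have : 0 <= `|x - x0| by [].
nra.
Qed.

Lemma compE (R : realType) (p q r : R) a b m i :
  (Smap p q r a \o iter m (Smap p q r b) \o Smap p q r i) = Sw p q r (a :: nseq m b ++ [:: i]).
Proof. by apply: funext => x /=; rewrite Sw_cat iter_Sw. Qed.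

Lemma valid_w a b m i : (1 <= a <= 6)%N -> (1 <= b <= 6)%N -> (1 <= i <= 6)%N -> valid (a :: nseq m b ++ [:: i]).
Proof.
move=> ha hb hi; rewrite /valid /= ha /= all_cat /= hi andbT.
by rewrite all_nseq hb orbT.
Qed.

Lemma D_par (R : realType) (p r q : R) m n : 0 < r -> r < 1/36 -> 0 < p -> p < r ->
  Dmn m n p r q -> par p q r /\ 0 < q.
Proof.
move=> r0 r1 p0 pr /andP[h1 h2].
have : 0 < aa R * r ^+ n.+1 / p ^+ m.
  by rewrite divr_gt0 ?exprn_gt0 // mulr_gt0 ?exprn_gt0 // /aa; lra.
move=> h0; split; last by lra.
split; lra.
Qed.

Lemma pair_mem i j : (2 <= i <= 6)%N -> (1 <= j <= 5)%N ->
  (i, j) \in [seq (i, j) | i <- [:: 2; 3; 4; 5; 6]%N, j <- [:: 1; 2; 3; 4; 5]%N].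
Proof.
move=> hi hj; apply/allpairsP; exists (i, j); split => //=; move: hi hj;
  case: i => [|[|[|[|[|[|[|i]]]]]]] //; case: j => [|[|[|[|[|[|[|j]]]]]]] //.
Qed.

Lemma closed_part (R : realType) (r p : R) (m n : nat)
  (hr0 : 0 < r) (hr1 : r < 1 / 36) (hp0 : 0 < p) (hpr : p < r) :
  closure (Deltamn m n p r) `&` Dmn m n p r `<=` Deltamn m n p r.
Proof.
move=> q0 [Cq0 Dq0]; split => //.
have [hp0' q0p] := D_par hr0 hr1 hp0 hpr Dq0.
have [K0 hK0] := att_exists hp0' q0p.
exists K0; split => //.
pose pairs := [seq (i, j) | i <- [:: 2; 3; 4; 5; 6]%N, j <- [:: 1; 2; 3; 4; 5]%N].
pose Fw i := (3 :: nseq m 1 ++ [:: i])%N.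
pose Gw j := (4 :: nseq n 6 ++ [:: j])%N.
pose P := fun (ij : nat * nat) (e : R) => exists x y, [/\ K0 x, K0 y &
  `|Sw p q0 r (Fw ij.1) x - Sw p q0 r (Gw ij.2) y| < e].
have [[i j] ijS Pij] : exists2 ij, ij \in pairs & forall e, 0 < e -> P ij e.
  apply: pig.
    by move=> ij e e' /andP[_ ee'] [x [y [Kx Ky h]]]; exists x, y; split => //; apply: lt_le_trans ee'.
  move=> e e0.
  have eta0 : 0 < e / 10 by apply: divr_gt0.
  have [q [[Dq [K [hK [i [j [hi [hj [c [[x1 Kx1 cx] [y1 Ky1 cy]]]]]]]]]] hq]] := (closureP_R _ q0).1 Cq0 _ eta0.
  have [hpq qp] := D_par hr0 hr1 hp0 hpr Dq.
  have hr : 0 <= r < 1 by apply/andP; split; lra.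
  have [k Hk] := geo hr eta0.
  have rk := Hk k (leqnn _).
  have [x' K0x' hx'] := approx k hpq hp0' hK hK0 Kx1.
  have [y' K0y' hy'] := approx k hpq hp0' hK hK0 Ky1.
  exists (i, j).
    exact: pair_mem.
  exists x', y'; split => //=.
  have hi' : (1 <= i <= 6)%N by case/andP: hi => /ltnW -> ->.
  have hj' : (1 <= j <= 6)%N by case/andP: hj => -> /leqW ->.
  have vF := valid_w m (isT : (1 <= 3 <= 6)%N) (isT : (1 <= 1 <= 6)%N) hi'.
  have vG := valid_w n (isT : (1 <= 4 <= 6)%N) (isT : (1 <= 6 <= 6)%N) hj'.
  have x01 := att01 hpq hK Kx1; have y01 := att01 hpq hK Ky1.
  have e1 := Sw_lip1 x' x1 hp0' vF.
  have e2 := Sw_q hpq hp0' vF x01.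
  have e3 := Sw_q hpq hp0' vG y01.
  have e4 := Sw_lip1 y1 y' hp0' vG.
  move: cx cy; rewrite !compE => cx cy.
  have E : Sw p q0 r (Fw i) x' - Sw p q0 r (Gw j) y' =
    (Sw p q0 r (Fw i) x' - Sw p q0 r (Fw i) x1) - (Sw p q r (Fw i) x1 - Sw p q0 r (Fw i) x1)
    + (Sw p q r (Gw j) y1 - Sw p q0 r (Gw j) y1) + (Sw p q0 r (Gw j) y1 - Sw p q0 r (Gw j) y').
    by rewrite /Fw /Gw cx cy; ring.
  rewrite E; set A1 := (X in X - _ + _ + _); set A2 := (X in _ - X + _ + _).
  set A3 := (X in _ - _ + X + _); set A4 := (X in _ - _ + _ + X).
  have N : `|A1 - A2 + A3 + A4| <= `|A1| + `|A2| + `|A3| + `|A4|.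
    apply: le_trans (ler_normD _ _) _; rewrite lerD2r.
    apply: le_trans (ler_normD _ _) _; rewrite lerD2r.
    by apply: le_trans (ler_normB _ _) _.
  apply: le_lt_trans N _.
  rewrite distrC in hx'.
  move: e1 e2 e3 e4 hx' hy' hq; rewrite /LL (distrC q0 q) -/A1 -/A2 -/A3 -/A4.
  lra.
exists i, j.
have [hi hj] : (2 <= i <= 6)%N /\ (1 <= j <= 5)%N.
  by move/allpairsP: ijS => [[a b] [/= ha hb [-> ->]]]; move: ha hb; rewrite !inE;
    case: a => [|[|[|[|[|[|[|a]]]]]]] //; case: b => [|[|[|[|[|[|[|b]]]]]]].
split => //; split => //.
rewrite !compE.
have cK0 := hK0.2.1.
apply: cmp_meet.
- by apply: continuous_compact => //; apply: continuous_subspaceT; apply: Sw_cont.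
- apply: compact_closed; first exact: Rhausdorff.
  by apply: continuous_compact => //; apply: continuous_subspaceT; apply: Sw_cont.
move=> e e0; have [x [y [Kx Ky h]]] := Pij e e0.
by exists (Sw p q0 r (Fw i) x), (Sw p q0 r (Gw j) y); split => //; [exists x | exists y].
Qed.

Lemma powR_pow (R : realType) (r s : R) k : 0 <= r -> (r ^+ k) `^ s = (r `^ s) ^+ k.
Proof.
move=> r0; rewrite -powR_mulrn // -powRrM mulrC powRrM powR_mulrn //; exact: powR_ge0.
Qed.

Lemma hs_zero (R : realType) (A : set R) (s C r : R) :
  0 < s -> 0 <= C -> 0 < r < 1 -> 36 * r `^ s < 1 ->
  (forall k : nat, exists U : nat -> set R,
      A `<=` \bigcup_(t in [set t | (t < 36 ^ k.+1)%N]) U t /\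
      forall t x y, U t x -> U t y -> `|x - y| <= C * r ^+ k) ->
  hausdorff_measure s A = 0%E.
Proof.
move=> s0 C0 /andP[r0 r1] rs HU.
have pre0 : forall delta, (0%E <= hausdorff_pre s delta A)%E.
  move=> delta; apply/ereal_infP => v [U [d [_ [_ [_ ->]]]]].
  by apply: nneseries_ge0 => k _ _; rewrite lee_fin powR_ge0.
apply/eqP; rewrite eq_le; apply/andP; split; last first.
  apply: le_trans (pre0 1) _; apply: ereal_sup_ubound; exists 1 => //=; exact: ltr01.
apply/ereal_supP => yy [delta /= d0 <-].
apply/lee_addgt0Pr => eps e0; rewrite add0e.
set rho := 36 * r `^ s.
have rho0 : 0 <= rho by rewrite mulr_ge0 ?powR_ge0.
set Cs := C `^ s.
have Cs0 : 0 <= Cs by rewrite powR_ge0.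
have rh : 0 <= rho < 1 by rewrite rho0.
have ee : 0 < eps / (36 * Cs + 1) by apply: divr_gt0 => //; lra.
have [k1 Hk1] := geo rh ee.
have rr : 0 <= r < 1 by apply/andP; split; lra.
have dd : 0 < delta / (C + 1) by apply: divr_gt0 => //; lra.
have [k2 Hk2] := geo rr dd.
set k := maxn k1 k2.
have hk1 := Hk1 k (leq_maxl _ _); have hk2 := Hk2 k (leq_maxr _ _).
have [U [AU HUd]] := HU k.
set Nt := (36 ^ k.+1)%N.
set Ck := C * r ^+ k.
have rk0 : 0 <= r ^+ k by rewrite exprn_ge0 //; lra.
have Ck0 : 0 <= Ck by rewrite mulr_ge0.
have Ckd : Ck <= delta.
  have -> : delta = delta / (C + 1) * (C + 1) by field; lra.
  rewrite /Ck; nra.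
pose U' := fun t => if (t < Nt)%N then U t else set0.
pose d := fun t => if (t < Nt)%N then Ck else 0.
apply: (@le_trans _ _ (\sum_(0 <= t <oo) ((d t) `^ s)%:E)%E).
  apply: ereal_inf_lbound; exists U', d; split; [|split; [|split]] => //.
  - by move=> t; rewrite /d; case: ifP => _; rewrite ?lexx ?Ck0 ?Ckd //; lra.
  - move=> t x y; rewrite /U' /d; case: ifP => _ //; exact: HUd.
  - move=> x /AU [t /= tN Ut]; exists t => //; by rewrite /U' tN.
rewrite (nneseries_split _ Nt); last by move=> t _; rewrite lee_fin powR_ge0.
rewrite add0n eseries0 ?adde0; last first.
  by move=> t tN _; rewrite /d ltnNge tN /= powR0 //; apply/negP => /eqP s00; lra.
rewrite sumEFin lee_fin.
rewrite (eq_big_nat _ _ (F2 := fun=> Ck `^ s)); last by move=> t /andP[_ tN]; rewrite /d tN.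
rewrite sumr_const_nat subn0 -mulr_natr /Nt natrX.
rewrite /Ck powRM // powR_pow; last lra.
have -> : (36%:R : R) ^+ k.+1 = 36 * 36 ^+ k by rewrite exprS.
have -> : Cs * (r `^ s) ^+ k * (36 * 36 ^+ k) = 36 * Cs * rho ^+ k.
  by rewrite /rho exprMn; ring.
have -> : eps = (36 * Cs + 1) * (eps / (36 * Cs + 1)) by field; lra.
have : 0 <= rho ^+ k by rewrite exprn_ge0.
nra.
Qed.

Fixpoint enc (w : seq nat) : nat := if w is a :: w' then (a.-1 + 6 * enc w')%N else 0%N.

Lemma enc_lt w : valid w -> (enc w < 6 ^ size w)%N.
Proof.
elim: w => //= a w IH /andP[ha hw]; have := IH hw; rewrite expnS.
move: (6 ^ size w)%N => N; lia.
Qed.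

Lemma enc_inj w1 w2 : valid w1 -> valid w2 -> size w1 = size w2 -> enc w1 = enc w2 -> w1 = w2.
Proof.
elim: w1 w2 => [|a w1 IH] [|b w2] //= /andP[ha h1] /andP[hb h2] [s] e.
have [ab ee] : a = b /\ enc w1 = enc w2 by lia.
by rewrite ab (IH w2).
Qed.

Lemma SwF (R : realType) (p q r : R) m w x :
  Sw p q r (3 :: nseq m 1 ++ w)%N x = hh R - q * (p ^+ m * Sw p q r w x).
Proof. by rewrite Sw_cons Sw_cat Sw_nseq1. Qed.

Lemma SwG (R : realType) (p q r : R) n w x :
  Sw p q r (4 :: nseq n 6 ++ w)%N x = hh R - r + r * (1 - r ^+ n + r ^+ n * Sw p q r w x).
Proof. by rewrite Sw_cons Sw_cat Sw_nseq6. Qed.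

Lemma Smap_ge (R : realType) (p q r : R) i x : par p q r -> (2 <= i <= 6)%N -> 0 <= x <= 1 ->
  aa R <= Smap p q r i x.
Proof.
case=> p0 pr q0 qr r1 hi /andP[x0 x1]; rewrite /aa /hh.
case: i hi => [|[|[|[|[|[|[|i]]]]]]] //= _; rewrite /aa /hh; nra.
Qed.

Definition Cc (R : realType) (p r : R) m n : R :=
  (p ^+ m * r + r ^+ n.+1) * r / (p ^+ m * (aa R - r * LL R) - r ^+ n.+1 * LL R).

Lemma transv (R : realType) (r p : R) (m n : nat) q1 q2 i j u v k x1 y1 x2 y2 :
  0 < r -> r < 1 / 36 -> 0 < p -> p < r -> Dmn m n p r q1 -> Dmn m n p r q2 ->
  (2 <= i <= 6)%N -> (1 <= j <= 6)%N -> valid u -> valid v -> size u = k -> size v = k ->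
  0 <= x1 <= 1 -> 0 <= y1 <= 1 -> 0 <= x2 <= 1 -> 0 <= y2 <= 1 ->
  Sw p q1 r (3 :: nseq m 1 ++ i :: u)%N x1 = Sw p q1 r (4 :: nseq n 6 ++ j :: v)%N y1 ->
  Sw p q2 r (3 :: nseq m 1 ++ i :: u)%N x2 = Sw p q2 r (4 :: nseq n 6 ++ j :: v)%N y2 ->
  `|q1 - q2| <= Cc p r m n * r ^+ k.
Proof.
move=> r0 r1 p0 pr D1 D2 hi hj hu hv su sv hx1 hy1 hx2 hy2.
rewrite !SwF !SwG => E1 E2.
have [hp1 q1p] := D_par r0 r1 p0 pr D1.
have [hp2 q2p] := D_par r0 r1 p0 pr D2.
have hi' : (1 <= i <= 6)%N by case/andP: hi => /ltnW -> ->.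
have vu : valid (i :: u) by rewrite /= hi'.
have vv : valid (j :: v) by rewrite /= hj.
set X1 := Sw p q1 r (i :: u) x1 in E1; set X2 := Sw p q2 r (i :: u) x2 in E2.
set Y1 := Sw p q1 r (j :: v) y1 in E1; set Y2 := Sw p q2 r (j :: v) y2 in E2.
have X1a : aa R <= X1 by rewrite /X1 Sw_cons; apply: Smap_ge => //; apply: Sw01.
have X11 : X1 <= 1 by case/andP: (Sw01 hp1 vu hx1).
have eX : `|X1 - X2| <= r ^+ k.+1 + LL R * `|q1 - q2|.
  have h1 := Sw_contr x1 x2 hp1 vu; rewrite /= su in h1.
  have h2 := Sw_q hp1 hp2 vu hx2.
  have h3 : `|x1 - x2| <= 1 by rewrite ler_norml; move: hx1 hx2 => /andP[? ?] /andP[? ?]; apply/andP; split; lra.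
  have h4 : `|X1 - X2| <= `|X1 - Sw p q1 r (i :: u) x2| + `|Sw p q1 r (i :: u) x2 - X2|.
    have -> : X1 - X2 = (X1 - Sw p q1 r (i :: u) x2) + (Sw p q1 r (i :: u) x2 - X2) by ring.
    exact: ler_normD.
  have rk : 0 <= r ^+ k.+1 by rewrite exprn_ge0 //; lra.
  have : 0 <= `|x1 - x2| by [].
  nra.
have eY : `|Y1 - Y2| <= r ^+ k.+1 + LL R * `|q1 - q2|.
  have h1 := Sw_contr y1 y2 hp1 vv; rewrite /= sv in h1.
  have h2 := Sw_q hp1 hp2 vv hy2.
  have h3 : `|y1 - y2| <= 1 by rewrite ler_norml; move: hy1 hy2 => /andP[? ?] /andP[? ?]; apply/andP; split; lra.
  have h4 : `|Y1 - Y2| <= `|Y1 - Sw p q1 r (j :: v) y2| + `|Sw p q1 r (j :: v) y2 - Y2|.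
    have -> : Y1 - Y2 = (Y1 - Sw p q1 r (j :: v) y2) + (Sw p q1 r (j :: v) y2 - Y2) by ring.
    exact: ler_normD.
  have rk : 0 <= r ^+ k.+1 by rewrite exprn_ge0 //; lra.
  have : 0 <= `|y1 - y2| by [].
  nra.
set P := p ^+ m; set rn := r ^+ n.
have P0 : 0 < P by rewrite exprn_gt0.
have rn0 : 0 < rn by rewrite exprn_gt0.
have T : r ^+ n.+1 = r * rn by rewrite exprS.
have Prn : aa R * rn < P.
  have [h h'] : aa R * (r * rn) / P < q1 /\ q1 < r by move: D1; rewrite /Dmn /= -T => /andP[].
  have : aa R * (r * rn) / P * P < r * P by rewrite ltr_pM2r //; apply: lt_trans h h'.
  rewrite mulfVK; last by rewrite gt_eqF.
  have -> : aa R * (r * rn) = r * (aa R * rn) by ring.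
  by rewrite ltr_pM2l.
set d := `|q1 - q2|.
set rho := r ^+ k.+1.
have key : P * d * X1 <= r * rn * `|Y1 - Y2| + P * q2 * `|X1 - X2|.
  have -> : P * d * X1 = `|P * (q1 - q2) * X1|.
    by rewrite !normrM (gtr0_norm P0) (ger0_norm (_ : 0 <= X1)) //; move: X1a; rewrite /aa; lra.
  have -> : P * (q1 - q2) * X1 = r * rn * (Y2 - Y1) - P * q2 * (X1 - X2).
    have F1 : q1 * (P * X1) = r * rn - r * rn * Y1.
      have H : hh R - q1 * (P * X1) - (hh R - r + r * (1 - rn + rn * Y1)) = 0 by rewrite E1 subrr.
      rewrite -[LHS]addr0 -{1}H; ring.
    have F2 : q2 * (P * X2) = r * rn - r * rn * Y2.
      have H : hh R - q2 * (P * X2) - (hh R - r + r * (1 - rn + rn * Y2)) = 0 by rewrite E2 subrr.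
      rewrite -[LHS]addr0 -{1}H; ring.
    have -> : P * (q1 - q2) * X1 = q1 * (P * X1) - q2 * (P * X2) - P * q2 * (X1 - X2) by ring.
    by rewrite F1 F2; ring.
  apply: le_trans (ler_normB _ _) _.
  rewrite !normrM distrC (gtr0_norm P0) (gtr0_norm r0) (gtr0_norm rn0) (gtr0_norm q2p) //.
have d0 : 0 <= d by rewrite /d normr_ge0.
have hLL : LL R = 36 / 35 by [].
have haa : aa R = 3 / 15 by [].
have c0 : 0 < P * (aa R - r * LL R) - r ^+ n.+1 * LL R.
  rewrite T hLL haa; rewrite haa in Prn.
  have : 0 < (P - 3 / 15 * rn) * (3 / 15 - r * (36 / 35)) by apply: mulr_gt0; lra.
  nra.
rewrite /Cc -/P.
set c := P * (aa R - r * LL R) - r ^+ n.+1 * LL R in c0 *.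
have main : d * c <= (P * r + r ^+ n.+1) * rho.
  rewrite /c T hLL haa; rewrite hLL in eX eY; rewrite haa in X1a.
  have rho0 : 0 <= rho by rewrite exprn_ge0 //; lra.
  have rrn : 0 <= r * rn by apply: mulr_ge0; lra.
  have sa : r * rn * `|Y1 - Y2| <= r * rn * (rho + 36 / 35 * d) by rewrite ler_wpM2l.
  have Pq : 0 <= P * q2 by apply: mulr_ge0; lra.
  have sb : P * q2 * `|X1 - X2| <= P * q2 * (rho + 36 / 35 * d) by rewrite ler_wpM2l.
  have sb' : P * q2 * (rho + 36 / 35 * d) <= P * r * (rho + 36 / 35 * d).
    have h36 : 0 <= 36 / 35 * d by apply: mulr_ge0 => //; lra.
    apply: ler_wpM2r; first lra.
    apply: ler_wpM2l; first lra.
    by case: hp2.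
  have sc : P * 3 / 15 * d <= P * d * X1.
    have -> : P * 3 / 15 * d = P * d * (3 / 15) by ring.
    by rewrite ler_wpM2l //; apply: mulr_ge0; lra.
  move: key sa sb sb' sc; set A1 := `|Y1 - Y2|; set A2 := `|X1 - X2|; move=> key sa sb sb' sc.
  have E1' : d * (P * (3 / 15 - r * (36 / 35)) - r * rn * (36 / 35)) = P * 3 / 15 * d - (r * rn + P * r) * (36 / 35 * d) by ring.
  have E2' : (P * r + r * rn) * rho = (r * rn + P * r) * rho by ring.
  have E3' : r * rn * (rho + 36 / 35 * d) + P * r * (rho + 36 / 35 * d) = (r * rn + P * r) * rho + (r * rn + P * r) * (36 / 35 * d) by ring.
  rewrite E1' E2'.
  lra.
rewrite -ler_pdivlMr // in main.
apply: le_trans main _; rewrite /rho (exprS r k) !mulrA mulrAC.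
exact: lexx.
Qed.

Lemma rs_lt (R : realType) (r s : R) : 0 < r < 1 -> - (2 * ln 6) / ln r < s -> 36 * r `^ s < 1.
Proof.
move=> /andP[r0 r1] hs.
have lr : ln r < 0 by apply: ln_lt0; rewrite r0.
have l6 : 0 < ln (6 : R) by apply: ln_gt0; lra.
have e6 : expR (ln (6 : R)) = 6 by rewrite lnK // posrE; lra.
have er : expR (ln r) = r by rewrite lnK // posrE.
rewrite -er -expRM.
have -> : (36 : R) = expR (ln 6 + ln 6) by rewrite expRD e6; lra.
rewrite -expRD expR_lt1.
have hb : - (2 * ln (6 : R)) / ln r * ln r = - (2 * ln 6) by field; lra.
have : (s - - (2 * ln (6 : R)) / ln r) * ln r < 0 by rewrite pmulr_rlt0 //; lra.
nra.
Qed.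

Lemma sub_word (i j : nat) (u v : seq nat) m n : (3 :: nseq m 1 ++ [:: i]) ++ u = (3 :: nseq m 1 ++ i :: u)%N
  /\ (4 :: nseq n 6 ++ [:: j]) ++ v = (4 :: nseq n 6 ++ j :: v)%N.
Proof. by rewrite /= -!catA. Qed.

Lemma dim_part (R : realType) (r p : R) (m n : nat)
  (hr0 : 0 < r) (hr1 : r < 1 / 36) (hp0 : 0 < p) (hpr : p < r) :
  (hausdorff_dim (Deltamn m n p r) <= (- (2 * ln 6) / ln r)%:E)%E.
Proof.
set b := - (2 * ln 6) / ln r.
have lr : ln r < 0 by apply: ln_lt0; rewrite hr0 /=; lra.
have l6 : 0 < ln (6 : R) by apply: ln_gt0; lra.
have hb : b * ln r = - (2 * ln 6) by rewrite /b; field; lra.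
have b0 : 0 < b by nra.
apply/lee_addgt0Pr => e e0.
have s0 : 0 < b + e by lra.
have rr : 0 < r < 1 by apply/andP; split; lra.
have rs : 36 * r `^ (b + e) < 1 by apply: rs_lt => //; rewrite -/b; lra.
apply: ereal_inf_lbound; exists (b + e) => //; split => //.
apply: (hs_zero s0 (C := Num.max (Cc p r m n) 0) _ rr rs); first by rewrite le_max lexx orbT.
move=> k.
pose good (q : R) (w : seq nat) := exists i u j v, ([/\ w = (i :: u ++ j :: v)%N, size u = k /\ size v = k,
  (2 <= i <= 6)%N, valid (i :: u) & valid (j :: v)] /\
  exists x y : R, [/\ 0 <= x <= 1, 0 <= y <= 1 &
    Sw p q r (3 :: nseq m 1 ++ i :: u)%N x = Sw p q r (4 :: nseq n 6 ++ j :: v)%N y]).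
exists (fun t => [set q | Deltamn m n p r q /\ exists w, [/\ valid w, enc w = t & good q w]]).
split.
  move=> q Dq; case: (Dq) => Dmq [K [hK [i [j [hi [hj [c [[x Kx cx] [y Ky cy]]]]]]]]].
  have [hpq qp] := D_par hr0 hr1 hp0 hpr Dmq.
  have [u [hu su [x' Kx' xE]]] := att_dec k hK Kx.
  have [v [hv sv [y' Ky' yE]]] := att_dec k hK Ky.
  have hi' : (1 <= i <= 6)%N by case/andP: hi => /ltnW -> ->.
  have hj' : (1 <= j <= 6)%N by case/andP: hj => -> /leqW ->.
  have vw : valid (i :: u ++ j :: v).
    move: hu hv; rewrite /valid /= all_cat /= => -> ->; rewrite hi' andbT /=.
    by move: hj'; rewrite /= => ->.
  exists (enc (i :: u ++ j :: v)).
    rewrite /=; apply: leq_trans (enc_lt vw) _.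
    by rewrite /= size_cat /= su sv (_ : 36 = 6 * 6)%N // expnMn -expnD addSn addnS.
  split => //; exists (i :: u ++ j :: v); split => //.
  exists i, u, j, v; split; first split => //.
  - by move: hu; rewrite /valid /= hi'.
  - by move: hv; rewrite /valid /= hj'.
  exists x', y'; split; [exact: att01 hpq hK Kx' | exact: att01 hpq hK Ky' |].
  have [w1 w2] := sub_word i j u v m n.
  have cx' : Sw p q r (3 :: nseq m 1 ++ [:: i])%N x = c by rewrite -cx Sw_cons Sw_cat -iter_Sw.
  have cy' : Sw p q r (4 :: nseq n 6 ++ [:: j])%N y = c by rewrite -cy Sw_cons Sw_cat -iter_Sw.
  by rewrite -w1 -w2 !Sw_cat -xE -yE cx' cy'.
move=> t q1 q2 [D1 [w [vw ew [i [u [j [v [[wE [su sv] hi vu vv] [x1 [y1 [hx1 hy1 E1]]]]]]]]]]].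
move=> [D2 [w' [vw' ew' [i' [u' [j' [v' [[wE' [su' sv'] hi' vu' vv'] [x2 [y2 [hx2 hy2 E2]]]]]]]]]]].
have ww : w = w'.
  apply: enc_inj => //; first by rewrite wE wE' /= !size_cat /= su sv su' sv'.
  by rewrite ew ew'.
move: wE'; rewrite -ww wE => /eqP; rewrite eqseq_cons => /andP[/eqP ii].
rewrite eqseq_cat ?su ?su' // => /andP[/eqP uu]; rewrite eqseq_cons => /andP[/eqP jj /eqP vvv].
subst i' u' j' v'.
have hj : (1 <= j <= 6)%N by case/andP: vv.
apply: le_trans (transv hr0 hr1 hp0 hpr D1.1 D2.1 hi hj _ _ su sv hx1 hy1 hx2 hy2 E1 E2) _.
- by case/andP: vu.
- by case/andP: vv.
rewrite ler_wpM2r ?exprn_ge0 ?le_max ?lexx //; lra.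
Qed.

Theorem lemma4 (R : realType) (r p : R) (m n : nat)
  (hr0 : 0 < r) (hr1 : r < 1 / 36) (hp0 : 0 < p) (hpr : p < r) :
  (Deltamn m n p r `<=` Dmn m n p r /\
   closure (Deltamn m n p r) `&` Dmn m n p r `<=` Deltamn m n p r) /\
  (hausdorff_dim (Deltamn m n p r) <= (- (2 * ln 6) / ln r)%:E)%E.
Proof.
split; first split.
- by move=> q [].
- exact: closed_part.
- exact: dim_part.
Qed.
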